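(* Let $(A,\mathfrak m)$ be a Noetherian local ring with infinite residue field, $I$ an $\mathfrak m$-primary ideal, and $M$ a finitely generated $A$-module with $\dim M = 1$. Let $b$ be a positive integer such that $IM \subseteq \mathfrak m^b M$. Then $h_{\overline{G_I(M)}}(0) \ge b$, where $\overline{G_I(M)} = G_I(M)/H^0_{G_+}(G_I(M))$.
   Context: $G = \bigoplus_{n\ge0} I^n/I^{n+1}$, $G_+ = \bigoplus_{n>0}I^n/I^{n+1}$, $G_I(M) = \bigoplus_{n\ge0} I^nM/I^{n+1}M$ is the associated graded module, and for a graded $G$-module $F$, $h_F(t) = \ell(F_t)$ denotes the length of its degree-$t$ component. *)

(* Defs.v *)
From HB Require Import structures.
From mathcomp Require Import all_boot all_order all_algebra.
Set Implicit Arguments. Unset Strict Implicit. Unset Printing Implicit Defensive.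
Import Order.TTheory GRing.Theory Num.Theory.
Local Open Scope ring_scope.

Section CommAlg.
Variable A : comNzRingType.

Definition is_ideal (I : A -> Prop) : Prop :=
  [/\ I 0, (forall x y, I x -> I y -> I (x + y)) & (forall a x, I x -> I (a * x))].

Definition sub_ideal (I J : A -> Prop) : Prop := forall x, I x -> J x.

Definition gen_ideal (s : seq A) (x : A) : Prop :=
  exists c : seq A, size c = size s /\ x = \sum_(i < size s) c`_i * s`_i.

Definition finitely_generated_ideal (I : A -> Prop) : Prop :=
  exists s : seq A, forall x, I x <-> gen_ideal s x.

Definition noetherian_ring : Prop :=
  forall I, is_ideal I -> finitely_generated_ideal I.

Definition proper_ideal (I : A -> Prop) : Prop := is_ideal I /\ ~ I 1.

Definition maximal_ideal (m : A -> Prop) : Prop :=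
  proper_ideal m /\
  forall J, proper_ideal J -> sub_ideal m J -> forall x, J x <-> m x.

Definition prime_ideal (P : A -> Prop) : Prop :=
  proper_ideal P /\ forall x y, P (x * y) -> P x \/ P y.

Definition local_ring (m : A -> Prop) : Prop :=
  maximal_ideal m /\ forall n, maximal_ideal n -> forall x, n x <-> m x.

(* the residue field A/m is infinite: no finite list of elements meets
   every residue class *)
Definition infinite_residue_field (m : A -> Prop) : Prop :=
  forall s : seq A, exists a : A, forall x, x \in s -> ~ m (a - x).

(* I is m-primary: sqrt(I) = m (with m maximal this forces I to be primary) *)
Definition primary_to (I m : A -> Prop) : Prop :=
  is_ideal I /\ forall x, m x <-> exists n : nat, I (x ^+ n).

Definition ideal_mul (I J : A -> Prop) (x : A) : Prop :=
  exists s : seq (A * A),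
    (forall p, p \in s -> I p.1 /\ J p.2) /\ x = \sum_(p <- s) p.1 * p.2.

Fixpoint ideal_pow (I : A -> Prop) (n : nat) : A -> Prop :=
  match n with
  | 0 => fun _ => True
  | n'.+1 => ideal_mul (ideal_pow I n') I
  end.

Variable M : lmodType A.

Definition is_submod (N : M -> Prop) : Prop :=
  [/\ N 0, (forall x y, N x -> N y -> N (x + y)) & (forall a x, N x -> N (a *: x))].

Definition mod_mul (J : A -> Prop) (N : M -> Prop) (x : M) : Prop :=
  exists s : seq (A * M),
    (forall p, p \in s -> J p.1 /\ N p.2) /\ x = \sum_(p <- s) p.1 *: p.2.

Definition finitely_generated_module : Prop :=
  exists s : seq M, forall x : M, mod_mul (fun _ => True) (fun y => y \in s) x.

Definition ann_mod (a : A) : Prop := forall x : M, a *: x = 0.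

(* there is a chain of primes P_0 < P_1 < ... < P_n containing Ann(M),
   i.e. a chain of length n in Supp M = V(Ann M) *)
Definition supp_chain (n : nat) : Prop :=
  exists P : nat -> A -> Prop,
    (forall i, (i <= n)%N -> prime_ideal (P i) /\ sub_ideal ann_mod (P i)) /\
    (forall i, (i < n)%N -> sub_ideal (P i) (P i.+1) /\
                            exists x, P i.+1 x /\ ~ P i x).

Definition dim_mod_eq (d : nat) : Prop := supp_chain d /\ ~ supp_chain d.+1.

Definition ssub_mod (N1 N2 : M -> Prop) : Prop :=
  (forall x, N1 x -> N2 x) /\ exists x, N2 x /\ ~ N1 x.

(* length of the quotient module M / W is at least n:
   there is a strict chain of n+1 submodules of M between W and M
   (submodules of M/W correspond to submodules of M containing W) *)
Definition quot_length_ge (W : M -> Prop) (n : nat) : Prop :=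
  exists N : nat -> M -> Prop,
    (forall i, (i <= n)%N -> is_submod (N i) /\ forall x, W x -> N i x) /\
    (forall i, (i < n)%N -> ssub_mod (N i) (N i.+1)).

(* The degree-0 component of H^0_{G_+}(G_I(M)), lifted to M:
   x + IM in G_0 = M/IM is killed by a power of G_+ iff, for some k,
   for all n >= k, I^n x subset I^{n+1} M  (G_+^k = \bigoplus_{n>=k} G_n). *)
Definition H0_deg0_lift (I : A -> Prop) (x : M) : Prop :=
  exists k : nat, forall n : nat, (k <= n)%N ->
    forall a : A, ideal_pow I n a ->
      mod_mul (ideal_pow I n.+1) (fun _ => True) (a *: x).

(* h_{\bar G}(0) >= b where \bar G = G_I(M)/H^0_{G_+}(G_I(M)):
   \bar G_0 = (M/IM)/(H^0)_0 = M / H0_deg0_lift I  (note IM lies in it) *)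
Definition hbar0_ge (I : A -> Prop) (b : nat) : Prop :=
  quot_length_ge (fun x => mod_mul I (fun _ => True) x \/ H0_deg0_lift I x) b.

End CommAlg.

(* Main.v *)
Require Import Defs.
From HB Require Import structures.
From mathcomp Require Import all_boot all_order all_algebra.
From Stdlib Require Import Classical ClassicalEpsilon.
From mathcomp Require Import zify.
Set Implicit Arguments. Unset Strict Implicit. Unset Printing Implicit Defensive.
Import Order.TTheory GRing.Theory Num.Theory.
Local Open Scope ring_scope.

Lemma ideal_mul_ind (A : comNzRingType) (I J : A -> Prop) (Pr : A -> Prop) :
  Pr 0 -> (forall x y, Pr x -> Pr y -> Pr (x + y)) ->
  (forall a b, I a -> J b -> Pr (a * b)) ->
  forall x, ideal_mul I J x -> Pr x.
Proof.
move=> P0 PD Pg x [s [Hs ->]].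
elim: s Hs => [|p s IH] Hs; first by rewrite big_nil.
rewrite big_cons; apply: PD.
  by have [] := Hs p (mem_head _ _); apply: Pg.
by apply: IH => q qs; apply: Hs; rewrite in_cons qs orbT.
Qed.

Lemma mod_mul_ind (A : comNzRingType) (M : lmodType A) (J : A -> Prop) (N : M -> Prop)
  (Pr : M -> Prop) :
  Pr 0 -> (forall x y, Pr x -> Pr y -> Pr (x + y)) ->
  (forall a v, J a -> N v -> Pr (a *: v)) ->
  forall x, mod_mul J N x -> Pr x.
Proof.
move=> P0 PD Pg x [s [Hs ->]].
elim: s Hs => [|p s IH] Hs; first by rewrite big_nil.
rewrite big_cons; apply: PD.
  by have [] := Hs p (mem_head _ _); apply: Pg.
by apply: IH => q qs; apply: Hs; rewrite in_cons qs orbT.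
Qed.

Lemma ideal_mul_single (A : comNzRingType) (I J : A -> Prop) a b :
  I a -> J b -> ideal_mul I J (a * b).
Proof.
move=> Ia Jb; exists [:: (a, b)]; split; last by rewrite big_seq1.
by move=> p; rewrite inE => /eqP ->.
Qed.

Lemma mod_mul_single (A : comNzRingType) (M : lmodType A) (J : A -> Prop) (N : M -> Prop) a v :
  J a -> N v -> mod_mul J N (a *: v).
Proof.
move=> Ja Nv; exists [:: (a, v)]; split; last by rewrite big_seq1.
by move=> p; rewrite inE => /eqP ->.
Qed.

Lemma mod_mul0 (A : comNzRingType) (M : lmodType A) (J : A -> Prop) (N : M -> Prop) :
  mod_mul J N 0.
Proof. by exists [::]; split=> //; rewrite big_nil. Qed.

Lemma mod_mulD (A : comNzRingType) (M : lmodType A) (J : A -> Prop) (N : M -> Prop) x y :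
  mod_mul J N x -> mod_mul J N y -> mod_mul J N (x + y).
Proof.
move=> [s [Hs ->]] [t [Ht ->]]; exists (s ++ t); split; last by rewrite big_cat.
by move=> p; rewrite mem_cat => /orP [] ?; [apply: Hs | apply: Ht].
Qed.

Lemma mod_mulZ (A : comNzRingType) (M : lmodType A) (J : A -> Prop) (N : M -> Prop) c x :
  (forall a, J a -> J (c * a)) -> mod_mul J N x -> mod_mul J N (c *: x).
Proof.
move=> HJ; apply: (@mod_mul_ind _ _ J N (fun x => mod_mul J N (c *: x))).
  by rewrite scaler0; apply: mod_mul0.
  by move=> x1 x2 h1 h2; rewrite scalerDr; exact: mod_mulD h1 h2.
by move=> a v Ja Nv; rewrite scalerA; apply: mod_mul_single=> //; apply: HJ.
Qed.

Lemma mod_mul_mono (A : comNzRingType) (M : lmodType A) (J J' : A -> Prop) (N : M -> Prop) x :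
  (forall a, J a -> J' a) -> mod_mul J N x -> mod_mul J' N x.
Proof.
move=> HJ; apply: (@mod_mul_ind _ _ J N (mod_mul J' N)); first exact: mod_mul0.
  by move=> x1 x2 h1 h2; exact: mod_mulD h1 h2.
by move=> a v Ja Nv; apply: mod_mul_single=> //; apply: HJ.
Qed.

Lemma ideal_mul_ideal (A : comNzRingType) (I J : A -> Prop) :
  is_ideal J -> is_ideal (ideal_mul I J).
Proof.
move=> [I0 ID IM]; split.
- by exists [::]; split=> //; rewrite big_nil.
- move=> x y [s [Hs ->]] [t [Ht ->]]; exists (s ++ t); split; last by rewrite big_cat.
  by move=> p; rewrite mem_cat => /orP [] ?; [apply: Hs | apply: Ht].
- move=> c x; apply: (@ideal_mul_ind _ I J (fun x => ideal_mul I J (c * x))).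
  + by rewrite mulr0; exists [::]; split=> //; rewrite big_nil.
  + move=> u v [s [Hs Hu]] [t [Ht Hv]]; rewrite mulrDr Hu Hv.
    exists (s ++ t); split; last by rewrite big_cat.
    by move=> p; rewrite mem_cat => /orP [] ?; [apply: Hs | apply: Ht].
  + by move=> a b Ia Jb; rewrite mulrCA; apply: ideal_mul_single=> //; apply: IM.
Qed.

Lemma ideal_pow_ideal (A : comNzRingType) (I : A -> Prop) n :
  is_ideal I -> is_ideal (ideal_pow I n).
Proof.
move=> HI; case: n => [|n] /=.
- by split.
- exact: ideal_mul_ideal.
Qed.

Lemma pow_mem (A : comNzRingType) (I : A -> Prop) x n : I x -> ideal_pow I n (x ^+ n).
Proof.
move=> Ix; elim: n => [|n IH] //=; rewrite exprSr; exact: ideal_mul_single.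
Qed.

Lemma ideal_sum (A : comNzRingType) (K : A -> Prop) (I : Type) (r : seq I) (P : pred I) F :
  is_ideal K -> (forall i, P i -> K (F i)) -> K (\sum_(i <- r | P i) F i).
Proof. by move=> [K0 KD KM] HF; apply: big_ind. Qed.

Lemma ideal_pow_succ_sub (A : comNzRingType) (I : A -> Prop) n x :
  is_ideal I -> ideal_pow I n.+1 x -> ideal_pow I n x.
Proof.
move=> HI /=; have [K0 KD KM] := ideal_pow_ideal n HI.
apply: ideal_mul_ind => // a b Ia Ib; rewrite mulrC; exact: KM.
Qed.

Lemma ideal_pow_mono (A : comNzRingType) (I : A -> Prop) n k x :
  is_ideal I -> (n <= k)%N -> ideal_pow I k x -> ideal_pow I n x.
Proof.
move=> HI /subnK <-; elim: (k - n)%N => [|d IH] //= H.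
apply: IH; exact: ideal_pow_succ_sub H.
Qed.

Lemma gen_mem (A : comNzRingType) (s : seq A) v : v \in s -> gen_ideal s v.
Proof.
move=> vs; exists [seq (i == index v s)%:R | i <- iota 0 (size s)].
rewrite size_map size_iota; split=> //.
have iv : (index v s < size s)%N by rewrite index_mem.
rewrite (bigD1 (Ordinal iv)) //= big1 ?addr0.
  by rewrite (nth_map 0%N) ?size_iota // nth_iota // add0n eqxx mul1r nth_index.
move=> i /negbTE ne; rewrite (nth_map 0%N) ?size_iota // nth_iota // add0n.
suff -> : (i == index v s :> nat) = false by rewrite mul0r.
by apply/negbTE; apply: contraFN ne => /eqP h; apply/eqP/val_inj.
Qed.

Lemma gen_sub (A : comNzRingType) (K : A -> Prop) (s : seq A) x :
  is_ideal K -> (forall v, v \in s -> K v) -> gen_ideal s x -> K x.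
Proof.
move=> HK Hs [c [_ ->]]; apply: ideal_sum => // i _.
case: HK => _ _ KM; apply: KM; apply: Hs; exact: mem_nth.
Qed.

Lemma proper_sub_m (A : comNzRingType) (m : A -> Prop) :
  noetherian_ring A -> local_ring m ->
  forall J : A -> Prop, Defs.proper_ideal J -> sub_ideal J m.
Proof.
move=> Hn [_ Hloc] J HJ.
pose S K := Defs.proper_ideal K /\ sub_ideal J K.
case: (classic (exists K, S K /\ forall K', S K' -> sub_ideal K K' -> sub_ideal K' K))
  => [[K [[PK JK] Kmax]] | Hno].
  move=> x Jx; apply/(Hloc K _ x); last exact: JK.
  split=> // J' PJ' KJ' y; split; last exact: KJ'.
  by apply: Kmax => //; split => // z /JK /KJ'.
have step : forall K : {K : A -> Prop | S K}, {K' : {K : A -> Prop | S K} |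
    sub_ideal (sval K) (sval K') /\ exists x, sval K' x /\ ~ sval K x}.
  move=> [K SK]; apply: constructive_indefinite_description.
  apply: NNPP => H; apply: Hno; exists K; split=> // K' SK' KK'.
  apply: NNPP => nK'K; apply: H; exists (exist _ K' SK'); split=> //=.
  apply: NNPP => nex; apply: nK'K => x Kx; apply: NNPP => nKx; apply: nex.
  by exists x.
pose f k := sval (step k).
pose k0 : {K : A -> Prop | S K} := exist _ J (conj HJ (fun x h => h)).
pose c n := sval (iter n f k0).
have cS n : S (c n) by rewrite /c; case: (iter n f k0).
have cI n : is_ideal (c n) by case: (cS n) => [[]].
have cmono n k : (n <= k)%N -> sub_ideal (c n) (c k).
  move/subnK <-; elim: (k - n)%N => [|d IH] //= x Hx.
  rewrite /c addSn iterS; apply: (proj1 (proj2_sig (step _))); exact: IH.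
pose U x := exists n, c n x.
have UI : is_ideal U.
  split.
  - by exists 0%N; case: (cI 0%N).
  - move=> x y [n1 h1] [n2 h2]; exists (maxn n1 n2).
    case: (cI (maxn n1 n2)) => _ KD _; apply: KD.
      by apply: cmono h1; rewrite leq_maxl.
    by apply: cmono h2; rewrite leq_maxr.
  - by move=> a x [n h]; exists n; case: (cI n) => _ _ KM; apply: KM.
have [s Hs] := Hn U UI.
have [N HN] : exists N, forall v, v \in s -> c N v.
  have : forall v, v \in s -> U v by move=> v vs; apply/Hs/gen_mem.
  elim: s {Hs} => [|v s IH] Hs; first by exists 0%N.
  have [N1 HN1] := IH (fun w ws => Hs w (@mem_behead _ (v :: s) w ws)).
  have [n2 h2] := Hs v (mem_head _ _).
  exists (maxn N1 n2) => w; rewrite inE => /orP [/eqP -> | ws].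
    by apply: cmono h2; rewrite leq_maxr.
  by apply: (cmono N1); [rewrite leq_maxl | apply: HN1].
have [x [x1 x0]] := proj2 (proj2_sig (step (iter N f k0))).
apply: False_ind; apply: x0.
have Ux : U x by exists N.+1; rewrite /c iterS.
exact: gen_sub (cI N) HN (proj1 (Hs x) Ux).
Qed.

Lemma unit_1m (A : comNzRingType) (m : A -> Prop) :
  noetherian_ring A -> local_ring m ->
  forall z, m z -> exists e, e * (1 - z) = 1.
Proof.
move=> Hn Hl z mz; apply: NNPP => nu.
pose J x := exists e, x = e * (1 - z).
have mp : Defs.proper_ideal m by case: Hl => [[]].
have HJ : Defs.proper_ideal J.
  split.
  - split; first by exists 0; rewrite mul0r.
    + by move=> x y [e1 ->] [e2 ->]; exists (e1 + e2); rewrite mulrDl.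
    + by move=> a x [e ->]; exists (a * e); rewrite mulrA.
  - by move=> [e he]; apply: nu; exists e.
have : m (1 - z) by apply: (proper_sub_m Hn Hl HJ); exists 1; rewrite mul1r.
case: mp => [[_ KD _] n1] h; apply: n1.
by have := KD _ _ h mz; rewrite subrK.
Qed.

Definition spanF (A : comNzRingType) (M : lmodType A) (s : seq M) (x : M) :=
  exists c : M -> A, x = \sum_(u <- s) c u *: u.
Definition mspan (A : comNzRingType) (M : lmodType A) (m : A -> Prop) (s : seq M) (x : M) :=
  exists c : M -> A, (forall u, m (c u)) /\ x = \sum_(u <- s) c u *: u.

Lemma nakayama (A : comNzRingType) (M : lmodType A) (m : A -> Prop) :
  noetherian_ring A -> local_ring m ->
  forall s : seq M, (forall v, v \in s -> mspan m s v) -> forall v, v \in s -> v = 0.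
Proof.
move=> Hn Hl; have [[[[m0 mD mM] _] _] _] := Hl.
elim=> [|x s IH] H //.
have [c0 [mc0 hx0]] := H x (mem_head _ _).
rewrite big_cons in hx0.
have [e he] := unit_1m Hn Hl (mc0 x).
have hx : x = \sum_(u <- s) (e * c0 u) *: u.
  have -> : \sum_(u <- s) (e * c0 u) *: u = e *: (x - c0 x *: x).
    have -> : x - c0 x *: x = \sum_(u <- s) c0 u *: u.
      by rewrite {1}hx0 addrAC subrr add0r.
    by rewrite scaler_sumr; apply: eq_bigr => u _; rewrite scalerA.
  have -> : x - c0 x *: x = (1 - c0 x) *: x by rewrite scalerBl scale1r.
  by rewrite scalerA he scale1r.
have Hs : forall v, v \in s -> v = 0.
  apply: IH => v vs.
  have [cv [mcv hv]] := H v (@mem_behead _ (x :: s) v vs).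
  rewrite big_cons {2}hx scaler_sumr -big_split /= in hv.
  exists (fun u => cv x * (e * c0 u) + cv u); split.
    by move=> u; exact: mD _ _ (mM _ _ (mM _ _ (mc0 u))) (mcv u).
  by rewrite hv; apply: eq_bigr => u _; rewrite scalerA scalerDl.
move=> v; rewrite inE => /orP [/eqP -> | vs]; last exact: Hs.
by rewrite hx big_seq big1 // => u us; rewrite (Hs u us) scaler0.
Qed.

Lemma spanF0 (A : comNzRingType) (M : lmodType A) (s : seq M) : spanF s 0.
Proof. by exists (fun _ => 0); rewrite big1 // => u _; rewrite scale0r. Qed.

Lemma spanFD (A : comNzRingType) (M : lmodType A) (s : seq M) x y :
  spanF s x -> spanF s y -> spanF s (x + y).
Proof.
move=> [c ->] [d ->]; exists (fun u => c u + d u).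
by rewrite -big_split; apply: eq_bigr => u _; rewrite scalerDl.
Qed.

Lemma spanFZ (A : comNzRingType) (M : lmodType A) (s : seq M) a x :
  spanF s x -> spanF s (a *: x).
Proof.
move=> [c ->]; exists (fun u => a * c u).
by rewrite scaler_sumr; apply: eq_bigr => u _; rewrite scalerA.
Qed.

Lemma spanF_sum (A : comNzRingType) (M : lmodType A) (s : seq M) (I : Type) (r : seq I)
   (P : pred I) (F : I -> M) :
  (forall i, P i -> spanF s (F i)) -> spanF s (\sum_(i <- r | P i) F i).
Proof. move=> HF; apply: big_ind => //; [exact: spanF0 | exact: spanFD]. Qed.

Lemma spanF_mem (A : comNzRingType) (M : lmodType A) (s : seq M) v :
  uniq s -> v \in s -> spanF s v.
Proof.
move=> us vs; exists (fun u => if u == v then 1 else 0).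
rewrite (big_rem v) //= eqxx scale1r big_seq big1 ?addr0 // => u.
move=> ur; case: eqP => [e|]; last by rewrite scale0r.
by move: ur; rewrite e mem_rem_uniqF.
Qed.

Lemma spanF_zero (A : comNzRingType) (M : lmodType A) (s : seq M) x :
  (forall v, v \in s -> v = 0) -> spanF s x -> x = 0.
Proof.
move=> Hs [c ->]; rewrite big_seq big1 // => u us; by rewrite (Hs u us) scaler0.
Qed.

Lemma fg_prod (A : comNzRingType) (M : lmodType A) (K : A -> Prop) (t : seq A) (g : seq M) :
  (forall x, K x <-> gen_ideal t x) ->
  (forall x : M, mod_mul (fun _ => True) (fun y => y \in g) x) ->
  exists S : seq M,
  (forall x, mod_mul K (fun _ => True) x -> spanF S x) /\
  (forall v, v \in S -> mod_mul K (fun _ => True) v).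
Proof.
move=> HK Hg; exists (undup [seq a *: v | a <- t, v <- g]).
set S := undup _.
have Sgen a v : a \in t -> v \in g -> spanF S (a *: v).
  move=> aIt vg; apply: spanF_mem; first exact: undup_uniq.
  by rewrite mem_undup; apply/allpairsP; exists (a, v).
split.
- apply: mod_mul_ind; [exact: spanF0 | by move=> ????; apply: spanFD |].
  move=> a w Ka _; have [c [_ ->]] := (HK a).1 Ka.
  apply: (@mod_mul_ind _ _ _ _
     (fun w => spanF S ((\sum_(i < size t) c`_i * t`_i) *: w)) _ _ _ w (Hg w)).
  + by rewrite scaler0; apply: spanF0.
  + by move=> x1 x2 h1 h2; rewrite scalerDr; apply: spanFD.
  + move=> q v _ vg; rewrite scalerA mulrC -scalerA; apply: spanFZ.
    rewrite scaler_suml; apply: spanF_sum => i _; rewrite -scalerA; apply: spanFZ.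
    by apply: Sgen => //; apply: mem_nth.
- move=> v; rewrite mem_undup => /allpairsP [[a w] [/= aIt wg ->]].
  by apply: mod_mul_single => //; apply/HK; apply: gen_mem.
Qed.

Lemma list_bound (T : eqType) (s : seq T) (Q : T -> nat -> Prop) :
  (forall u k k', (k <= k')%N -> Q u k -> Q u k') ->
  (forall u, u \in s -> exists k, Q u k) -> exists k, forall u, u \in s -> Q u k.
Proof.
move=> Hm; elim: s => [|v s IH] Hs; first by exists 0%N.
have [k1 h1] := IH (fun w ws => Hs w (@mem_behead _ (v :: s) w ws)).
have [k2 h2] := Hs v (mem_head _ _).
exists (maxn k1 k2) => w; rewrite inE => /orP [/eqP -> | ws].
  by apply: Hm h2; rewrite leq_maxr.
by apply: (Hm _ k1); [rewrite leq_maxl | apply: h1].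
Qed.

Lemma prime_pow (A : comNzRingType) (P : A -> Prop) x k :
  prime_ideal P -> P (x ^+ k) -> P x.
Proof.
move=> [[_ P1] Pp]; elim: k => [|k IH]; first by rewrite expr0.
by rewrite exprSr => /Pp [/IH|].
Qed.

Lemma key (A : comNzRingType) (m I : A -> Prop) (M : lmodType A) (b j : nat) (g : seq M)
  (P0 P1 : A -> Prop) :
  noetherian_ring A -> local_ring m -> primary_to I m ->
  (forall x : M, mod_mul (fun _ => True) (fun y => y \in g) x) ->
  prime_ideal P0 -> sub_ideal (ann_mod M) P0 -> Defs.proper_ideal P1 ->
  (exists y, P1 y /\ ~ P0 y) -> (j < b)%N ->
  (forall x : M, mod_mul I (fun _ => True) x ->
                 mod_mul (ideal_pow m b) (fun _ => True) x) ->
  (forall x : M, mod_mul (ideal_pow m j) (fun _ => True) x ->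
     exists w z, x = w + z /\ H0_deg0_lift I w /\
                 mod_mul (ideal_pow m j.+1) (fun _ => True) z) -> False.
Proof.
move=> Hn Hl [HI HIrad] Hg HP0 HannP HP1 [y [P1y nP0y]] jb Hsub Hdec.
have Hm : is_ideal m by case: Hl => [[[]]].
have my : m y by apply: (proper_sub_m Hn Hl HP1).
have [tQ HtQ] := Hn _ (ideal_pow_ideal j Hm).
have [SQ [HQ1 HQ2]] := fg_prod HtQ Hg.
pose Qb (u : M) (k : nat) := exists w z : M, u = w + z /\
   mod_mul (ideal_pow m j.+1) (fun _ => True) z /\
   forall n, (k <= n)%N -> forall a, ideal_pow I n a ->
     mod_mul (ideal_pow I n.+1) (fun _ => True) (a *: w).
have [n Hnb] : exists n, forall u, u \in SQ -> Qb u n.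
  apply: list_bound.
    move=> u k k' kk' [w [z [h1 [h2 h3]]]]; exists w, z; split=> //; split=> //.
    by move=> n' kn'; apply: h3; apply: leq_trans kn'.
  move=> u uS; have [w [z [h1 [[k hk] h3]]]] := Hdec u (HQ2 u uS).
  by exists k, w, z.
pose K := ideal_mul (ideal_pow I n) (ideal_pow m j).
have KI : is_ideal K by apply: ideal_mul_ideal; apply: ideal_pow_ideal.
have [tR HtR] := Hn _ KI.
have [SR [HR1 HR2]] := fg_prod HtR Hg.
pose R := mod_mul K (fun _ : M => True).
pose mR := mod_mul m R.
have mRZ c x : mR x -> mR (c *: x).
  by apply: mod_mulZ => a; case: Hm => _ _ hM; apply: hM.
have mR0 : mR 0 by apply: mod_mul0.
have mRD x1 x2 : mR x1 -> mR x2 -> mR (x1 + x2) by apply: mod_mulD.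
have LemB al : ideal_pow I n al -> forall z,
    mod_mul (ideal_pow m j.+1) (fun _ => True) z -> mR (al *: z).
  move=> Ial; apply: (@mod_mul_ind _ _ _ _ (fun z => mR (al *: z))).
  - by rewrite scaler0.
  - by move=> x1 x2 h1 h2; rewrite scalerDr; apply: mRD.
  move=> ga v Hga _.
  apply: (@ideal_mul_ind _ _ _ (fun ga => mR (al *: (ga *: v)))) Hga.
  - by rewrite scale0r scaler0.
  - by move=> x1 x2 h1 h2; rewrite scalerDl scalerDr; apply: mRD.
  move=> de ep Hde Hep.
  have -> : al *: ((de * ep) *: v) = ep *: ((al * de) *: v).
    by rewrite !scalerA [ep * _]mulrC mulrA.
  apply: mod_mul_single => //; apply: mod_mul_single => //.
  exact: ideal_mul_single.
have LemA w : mod_mul (ideal_pow I n.+1) (fun _ => True) w -> mR w.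
  apply: (@mod_mul_ind _ _ _ _ mR) => //.
  move=> ga v Hga _.
  apply: (@ideal_mul_ind _ _ _ (fun ga => mR (ga *: v))) Hga.
  - by rewrite scale0r.
  - by move=> x1 x2 h1 h2; rewrite scalerDl; apply: mRD.
  move=> al io Hal Hio; rewrite -scalerA; apply: LemB => //.
  apply: (mod_mul_mono (J := ideal_pow m b)).
    by move=> a; apply: ideal_pow_mono.
  by apply: Hsub; apply: mod_mul_single.
have RmR r : R r -> mR r.
  apply: (@mod_mul_ind _ _ _ _ mR) => //.
  move=> a x Ka _.
  apply: (@ideal_mul_ind _ _ _ (fun a => mR (a *: x))) Ka.
  - by rewrite scale0r.
  - by move=> x1 x2 h1 h2; rewrite scalerDl; apply: mRD.
  move=> al be Hal Hbe; rewrite -scalerA.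
  have [c ->] := HQ1 _ (@mod_mul_single _ _ (ideal_pow m j) (fun _ => True) be x Hbe Logic.I).
  rewrite scaler_sumr big_seq; apply: big_ind => // u uS.
  rewrite scalerA mulrC -scalerA; apply: mRZ.
  have [w [z [-> [hz hw]]]] := Hnb u uS.
  rewrite scalerDr; apply: mRD; last exact: LemB.
  by apply: LemA; apply: hw.
have Hspan r : mR r -> mspan m SR r.
  apply: (@mod_mul_ind _ _ _ _ (mspan m SR)).
  - exists (fun _ => 0); split; first by case: Hm.
    by rewrite big1 // => u _; rewrite scale0r.
  - move=> x1 x2 [c1 [h1 ->]] [c2 [h2 ->]]; exists (fun u => c1 u + c2 u); split.
      by move=> u; case: Hm => _ hD _; apply: hD.
    by rewrite -big_split; apply: eq_bigr => u _; rewrite scalerDl.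
  move=> mu rho Hmu Hrho; have [c ->] := HR1 _ Hrho.
  exists (fun u => mu * c u); split.
    by move=> u; case: Hm => _ _ hM; rewrite mulrC; apply: hM.
  by rewrite scaler_sumr; apply: eq_bigr => u _; rewrite scalerA.
have R0 : forall v, v \in SR -> v = 0.
  by apply: (nakayama Hn Hl) => v vS; apply: Hspan; apply: RmR; apply: HR2.
have [t It] := (HIrad y).1 my.
have Hann : ann_mod M ((y ^+ t) ^+ n * y ^+ j).
  move=> x; apply: (spanF_zero R0); apply: HR1; apply: mod_mul_single => //.
  by apply: ideal_mul_single; apply: pow_mem.
have [_ Pp] := HP0; have := HannP _ Hann; case/Pp => h; apply: nP0y.
  by rewrite -exprM in h; exact: prime_pow HP0 h.
exact: prime_pow HP0 h.
Qed.

Lemma H0_0 (A : comNzRingType) (M : lmodType A) (I : A -> Prop) : H0_deg0_lift I (0 : M).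
Proof. by exists 0%N => n _ a _; rewrite scaler0; apply: mod_mul0. Qed.

Lemma H0_D (A : comNzRingType) (M : lmodType A) (I : A -> Prop) (x y : M) :
  H0_deg0_lift I x -> H0_deg0_lift I y -> H0_deg0_lift I (x + y).
Proof.
move=> [k1 h1] [k2 h2]; exists (maxn k1 k2) => n kn a Ia; rewrite scalerDr.
apply: mod_mulD; [apply: h1 | apply: h2] => //; apply: leq_trans kn;
  [exact: leq_maxl | exact: leq_maxr].
Qed.

Lemma H0_Z (A : comNzRingType) (M : lmodType A) (I : A -> Prop) c (x : M) :
  is_ideal I -> H0_deg0_lift I x -> H0_deg0_lift I (c *: x).
Proof.
move=> HI [k h]; exists k => n kn a Ia; rewrite scalerA mulrC -scalerA.
apply: mod_mulZ; last exact: h.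
by move=> a'; case: (ideal_pow_ideal n.+1 HI) => _ _ hM; apply: hM.
Qed.

Lemma H0_IM (A : comNzRingType) (M : lmodType A) (I : A -> Prop) (x : M) :
  is_ideal I -> mod_mul I (fun _ => True) x -> H0_deg0_lift I x.
Proof.
move=> HI; apply: (@mod_mul_ind _ _ _ _ (H0_deg0_lift I)).
- exact: H0_0.
- by move=> ????; apply: H0_D.
move=> c v Ic _; exists 0%N => n _ a Ia; rewrite scalerA.
by apply: mod_mul_single => //; apply: ideal_mul_single.
Qed.

Unset Implicit Arguments.
Theorem lemma2p7 (A : comNzRingType) (m I : A -> Prop) (M : lmodType A) (b : nat) :
  noetherian_ring A ->
  local_ring m ->
  infinite_residue_field m ->
  primary_to I m ->
  finitely_generated_module M ->
  dim_mod_eq M 1 ->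
  (0 < b)%N ->
  (forall x : M, mod_mul I (fun _ => True) x ->
                 mod_mul (ideal_pow m b) (fun _ => True) x) ->
  hbar0_ge M I b.
Proof.
move=> Hn Hl _ Hpr [g Hg] [[P [HP HPc]] _] _ Hsub.
have HI : is_ideal I by case: Hpr.
have Hm : is_ideal m by case: Hl => [[[]]].
pose N (i : nat) (x : M) := exists w y, x = w + y /\ H0_deg0_lift I w /\
   mod_mul (ideal_pow m (b - i)) (fun _ => True) y.
exists N; split.
  move=> i _; split.
    split.
    - by exists 0, 0; rewrite addr0; split=> //; split; [apply: H0_0 | apply: mod_mul0].
    - move=> x y [w1 [y1 [-> [h1 k1]]]] [w2 [y2 [-> [h2 k2]]]].
      exists (w1 + w2), (y1 + y2); rewrite addrACA; split=> //; split.
        exact: H0_D.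
      exact: mod_mulD.
    - move=> a x [w [y [-> [h k]]]]; exists (a *: w), (a *: y); rewrite scalerDr.
      split=> //; split; first exact: H0_Z.
      apply: mod_mulZ k => a'; case: (ideal_pow_ideal (b - i) Hm) => _ _ hM.
      exact: hM.
  move=> x [hx|hx]; exists x, 0; rewrite addr0; split=> //; split; try exact: mod_mul0.
    exact: H0_IM.
  exact: hx.
move=> i ib; split.
  move=> x [w [y [-> [h k]]]]; exists w, y; split=> //; split=> //.
  apply: mod_mul_mono k => a; apply: ideal_pow_mono => //.
  by rewrite leq_sub2l.
apply: NNPP => nex.
have Hinc : forall x, N i.+1 x -> N i x.
  move=> x hx; apply: NNPP => nx; apply: nex; by exists x.
have [P0p P0a] := HP 0%N isT.
have [P1p P1a] := HP 1%N isT.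
have [_ [y [P1y nP0y]]] := HPc 0%N isT.
have ebi : (b - i = (b - i.+1).+1)%N by rewrite subnSK.
apply: (key (b := b) (j := (b - i.+1)%N) Hn Hl Hpr Hg P0p P0a (proj1 P1p)) => //.
- by exists y.
- by move: ib; clear; lia.
- move=> x hx.
  have [w [z [-> [hw hz]]]] : N i x.
    apply: Hinc; exists 0, x; rewrite add0r; split=> //; split; first exact: H0_0.
    exact: hx.
  by exists w, z; rewrite -ebi.
Qed.
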